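(* Let $X_1$ be a connected graph with at least two vertices, $X_2=K_2$ with $V(X_2)=\{1,2\}$, and $X=X_1\square X_2$. Let $\{a,b\}\in E(X_1)$ with $-2\notin\Lambda_{\mathbf f_{ab}}$, let $\varepsilon_1$ be the edge of $X$ joining $(a,1),(b,1)$ and $\varepsilon_2$ the edge joining $(a,2),(b,2)$. Then $\mathbf h_{\varepsilon_1}$ and $\mathbf h_{\varepsilon_2}$ are strongly cospectral with respect to the adjacency matrix $A_{\mathcal L}$ of $\mathcal L(X)$ if and only if $|\vartheta-\vartheta'|\neq2$ for all $\vartheta,\vartheta'\in\Lambda_{\mathbf f_{ab}}$. Moreover, if they are strongly cospectral, then $$\Psi^-_{\mathbf h_{\varepsilon_1},\mathbf h_{\varepsilon_2}}=\Lambda_{\mathbf f_{ab}},\qquad \Psi^+_{\mathbf h_{\varepsilon_1},\mathbf h_{\varepsilon_2}}=\{\vartheta+2:\vartheta\in\Lambda_{\mathbf f_{ab}}\}\cup\{-2\}.$$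
   Context: $X_1\square X_2$ is the Cartesian product (vertex set $V(X_1)\times V(X_2)$, $(x,y)\sim(x',y')$ iff ($x=x'$, $y\sim y'$) or ($y=y'$, $x\sim x'$)). The line graph $\mathcal L(Y)$ has vertex set $E(Y)$, edges adjacent iff they share an endpoint. $\mathbf h_\varepsilon$ is the vertex state in $\mathcal L(X)$ of edge $\varepsilon$; $\mathbf f_{ab}$ the vertex state in $\mathcal L(X_1)$ of $\{a,b\}$, and $\Lambda_{\mathbf f_{ab}}$ its eigenvalue support with respect to the adjacency matrix of $\mathcal L(X_1)$. With $A_{\mathcal L}=\sum_\vartheta\vartheta F_\vartheta$ (orthogonal spectral projections), $\Psi^\pm_{\mathbf h_{\varepsilon_1},\mathbf h_{\varepsilon_2}}=\{\vartheta: F_\vartheta\mathbf h_{\varepsilon_1}=\pm F_\vartheta\mathbf h_{\varepsilon_2}\neq\mathbf 0\}$; strong cospectrality means $F_\vartheta\mathbf h_{\varepsilon_1}=\pm F_\vartheta\mathbf h_{\varepsilon_2}$ for every $\vartheta$. *)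

(* Defs.v *)
From HB Require Import structures.
From mathcomp Require Import all_boot all_order all_algebra.
From mathcomp Require Import reals.
From Stdlib Require Import ClassicalEpsilon.
Set Implicit Arguments. Unset Strict Implicit. Unset Printing Implicit Defensive.
Import Order.TTheory GRing.Theory Num.Theory.
Local Open Scope ring_scope.

Definition simple_graph (T : finType) (e : rel T) : Prop := symmetric e /\ irreflexive e.
Definition connected_graph (T : finType) (e : rel T) : Prop := forall x y, connect e x y.

Definition cartprod (T1 T2 : finType) (e1 : rel T1) (e2 : rel T2) : rel (T1 * T2) :=
  fun p q => ((p.1 == q.1) && e2 p.2 q.2) || ((p.2 == q.2) && e1 p.1 q.1).

(* K2 on the vertex set bool; vertex 1 is false, vertex 2 is true. *)
Definition K2 : rel bool := fun i j => i != j.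

Definition is_edge (T : finType) (e : rel T) (s : {set T}) : bool :=
  [exists x, exists y, e x y && (s == [set x; y])].
Definition edge_of (T : finType) (e : rel T) := {s : {set T} | is_edge e s}.

Definition line_rel (T : finType) (e : rel T) : rel (edge_of e) :=
  fun s t => (s != t) && (val s :&: val t != set0).

Definition adjop (R : realType) (T : finType) (e : rel T) (v : T -> R) : T -> R :=
  fun x => \sum_(y | e x y) v y.
Definition dotv (R : realType) (T : finType) (u v : T -> R) : R := \sum_x u x * v x.

Definition vstate (R : realType) (T : finType) (x : T) : T -> R :=
  fun y => if y == x then 1 else 0.

(* w is the orthogonal projection of v onto the theta-eigenspace of A(e). *)
Definition is_eigproj (R : realType) (T : finType) (e : rel T) (theta : R)
    (v w : T -> R) : Prop :=
  (forall x, adjop e w x = theta * w x) /\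
  (forall u : T -> R, (forall x, adjop e u x = theta * u x) ->
     dotv (fun x => v x - w x) u = 0).

(* Spectral projection F_theta v (F_theta = 0 when theta is not an eigenvalue). *)
Definition specproj (R : realType) (T : finType) (e : rel T) (theta : R)
    (v : T -> R) : T -> R :=
  epsilon (inhabits (fun _ => 0)) (is_eigproj e theta v).

Definition eig_support (R : realType) (T : finType) (e : rel T) (v : T -> R)
    (theta : R) : Prop :=
  specproj e theta v <> (fun _ => 0).

Definition strongly_cospectral (R : realType) (T : finType) (e : rel T)
    (u v : T -> R) : Prop :=
  forall theta : R, specproj e theta u = specproj e theta v \/
                    specproj e theta u = (fun x => - specproj e theta v x).

Definition Psi_plus (R : realType) (T : finType) (e : rel T) (u v : T -> R)
    (theta : R) : Prop :=
  specproj e theta u = specproj e theta v /\ specproj e theta u <> (fun _ => 0).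

Definition Psi_minus (R : realType) (T : finType) (e : rel T) (u v : T -> R)
    (theta : R) : Prop :=
  specproj e theta u = (fun x => - specproj e theta v x) /\
  specproj e theta u <> (fun _ => 0).
Arguments line_rel {T} e.

(* Main.v *)
Require Import Defs.
From HB Require Import structures.
From mathcomp Require Import all_boot all_order all_algebra.
From mathcomp Require Import reals ring lra.
From Stdlib Require Import Classical ClassicalEpsilon FunctionalExtensionality.
Set Implicit Arguments. Unset Strict Implicit. Unset Printing Implicit Defensive.
Import Order.TTheory GRing.Theory Num.Theory.
Local Open Scope ring_scope.

Section Gen.
Variables (R : realType) (T : finType) (e : rel T).

Lemma big_enum (F : T -> R) : \sum_(i < #|T|) F (enum_val i) = \sum_x F x.
Proof.
rewrite [RHS](reindex (@enum_val T predT)) //.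
by exists enum_rank => x _; [exact: enum_valK | exact: enum_rankK].
Qed.

Definition vec (v : T -> R) : 'rV[R]_#|T| := \row_i v (enum_val i).
Definition Mth (th : R) : 'M[R]_#|T| :=
  \matrix_(i, j) ((e (enum_val i) (enum_val j))%:R - (i == j)%:R * th).

Lemma dotv_mx (u v : T -> R) : dotv u v = (vec u *m (vec v)^T) 0 0.
Proof.
rewrite !mxE /dotv -big_enum; apply: eq_bigr => i _; by rewrite !mxE.
Qed.

Lemma vecM (u : T -> R) th j :
  symmetric e ->
  (vec u *m Mth th) 0 j = adjop e u (enum_val j) - th * u (enum_val j).
Proof.
move=> he; rewrite mxE /adjop.
have -> : \sum_(y | e (enum_val j) y) u y = \sum_y (e y (enum_val j))%:R * u y.
  rewrite big_mkcond; apply: eq_bigr => y _; rewrite he.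
  by case: (e _ _); rewrite ?mul1r ?mul0r.
rewrite -big_enum (bigD1 j) //= [X in _ = X - _](bigD1 j) //= !mxE eqxx.
rewrite mulrBr mul1r [LHS]addrAC; congr (_ + _ - _); first exact: mulrC.
  by apply: eq_bigr => i /negbTE ij; rewrite !mxE ij mul0r subr0 mulrC.
exact: mulrC.
Qed.

Lemma eig_vec (u : T -> R) th : symmetric e ->
  (forall x, adjop e u x = th * u x) <-> vec u *m Mth th = 0.
Proof.
move=> he; split.
  move=> H; apply/rowP => j; rewrite vecM // H subrr mxE //.
move=> H x; have := congr1 (fun M : 'M[R]_(1, #|T|) => M 0 (enum_rank x)) H.
by rewrite vecM // enum_rankK mxE => /eqP; rewrite subr_eq0 => /eqP.
Qed.

Lemma Mth_sym th : symmetric e -> (Mth th)^T = Mth th.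
Proof. by move=> he; apply/matrixP => i j; rewrite !mxE he eq_sym. Qed.

Lemma dot_self0 (w : 'rV[R]_#|T|) : (w *m w^T) 0 0 = 0 -> w = 0.
Proof.
rewrite mxE => H; apply/rowP => j; rewrite mxE.
have P0 : forall i, predT i -> 0 <= w 0 i * w^T i 0.
  by move=> i _; rewrite mxE -expr2 sqr_ge0.
have := @psumr_eq0P _ _ predT (fun j => w 0 j * w^T j 0) P0 H j isT.
by rewrite mxE; move/eqP; rewrite mulf_eq0 orbb; move/eqP.
Qed.

Lemma eigproj_exists (th : R) (v : T -> R) : symmetric e -> exists w, is_eigproj e th v w.
Proof.
move=> he; set M := Mth th; set K := kermx M.
have cap0 : (K :&: M)%MS = 0.
  apply/row_matrixP => i; rewrite row0; apply: dot_self0.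
  have h1 : (row i (K :&: M)%MS <= K)%MS.
    exact: submx_trans (row_sub _ _) (capmxSl _ _).
  have h2 : (row i (K :&: M)%MS <= M)%MS.
    exact: submx_trans (row_sub _ _) (capmxSr _ _).
  move/sub_kermxP: h1 => h1; case/submxP: h2 => D hD.
  have MT : M^T = M by exact: Mth_sym.
  by rewrite {1}hD -mulmxA -{1}MT -trmx_mul h1 trmx0 mulmx0 mxE.
have full : row_full (K + M)%MS.
  rewrite /row_full; have := mxrank_sum_cap K M; rewrite cap0 mxrank0 addn0.
  rewrite mxrank_ker => ->; rewrite subnK //; exact: rank_leq_col.
have /sub_addsmxP [[a b] /= hv] := submx_full (vec v) full.
exists (fun x => (a *m K) 0 (enum_rank x)).
have vw : vec (fun x => (a *m K) 0 (enum_rank x)) = a *m K.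
  by apply/rowP => j; rewrite mxE enum_valK.
split.
  by apply/(eig_vec _ _ he); rewrite vw -mulmxA mulmx_ker mulmx0.
move=> u /(eig_vec _ _ he) hu; rewrite dotv_mx.
have -> : vec (fun x => v x - (a *m K) 0 (enum_rank x)) = b *m M.
  apply/rowP => j; rewrite !mxE.
  have := congr1 (fun M : 'M[R]_(1, #|T|) => M 0 j) hv; rewrite mxE => ->.
  by rewrite enum_valK !mxE addrAC subrr add0r.
have MT : M^T = M by exact: Mth_sym.
by rewrite -mulmxA -MT -trmx_mul hu trmx0 mulmx0 mxE.
Qed.
Lemma adjopB (u w : T -> R) x : adjop e (fun y => u y - w y) x = adjop e u x - adjop e w x.
Proof. by rewrite /adjop sumrB. Qed.
Lemma adjopD (u w : T -> R) x : adjop e (fun y => u y + w y) x = adjop e u x + adjop e w x.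
Proof. by rewrite /adjop big_split. Qed.
Lemma adjopZ c (u : T -> R) x : adjop e (fun y => c * u y) x = c * adjop e u x.
Proof. by rewrite /adjop mulr_sumr. Qed.
Lemma dotvB (u w z : T -> R) : dotv (fun y => u y - w y) z = dotv u z - dotv w z.
Proof. by rewrite /dotv -sumrB; apply: eq_bigr => i _; rewrite mulrBl. Qed.
Lemma dotvD (u w z : T -> R) : dotv (fun y => u y + w y) z = dotv u z + dotv w z.
Proof. by rewrite /dotv -big_split; apply: eq_bigr => i _; rewrite mulrDl. Qed.
Lemma dotvDr (u w z : T -> R) : dotv z (fun y => u y + w y) = dotv z u + dotv z w.
Proof. by rewrite /dotv -big_split; apply: eq_bigr => i _; rewrite mulrDr. Qed.
Lemma dotvBr (u w z : T -> R) : dotv z (fun y => u y - w y) = dotv z u - dotv z w.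
Proof. by rewrite /dotv -sumrB; apply: eq_bigr => i _; rewrite mulrBr. Qed.
Lemma dotvC (u w : T -> R) : dotv u w = dotv w u.
Proof. by apply: eq_bigr => i _; rewrite mulrC. Qed.

Lemma dotv_self0 (u : T -> R) : dotv u u = 0 -> u = (fun _ => 0).
Proof.
move=> H; apply: functional_extensionality => x.
have P0 : forall i, predT i -> 0 <= u i * u i.
  by move=> i _; rewrite -expr2 sqr_ge0.
have := @psumr_eq0P _ _ predT (fun x => u x * u x) P0 H x isT.
by move/eqP; rewrite mulf_eq0 orbb; move/eqP.
Qed.

Lemma eigproj_uniq (th : R) (v w1 w2 : T -> R) :
  is_eigproj e th v w1 -> is_eigproj e th v w2 -> w1 = w2.
Proof.
move=> [e1 o1] [e2 o2].
have ed : forall x, adjop e (fun y => w1 y - w2 y) x = th * (w1 x - w2 x).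
  by move=> x; rewrite adjopB e1 e2 mulrBr.
have := o1 _ ed; have := o2 _ ed.
move=> h2 h1.
have : dotv (fun y => w1 y - w2 y) (fun y => w1 y - w2 y) = 0.
  have E : (fun y => w1 y - w2 y) = (fun y => (v y - w2 y) - (v y - w1 y)).
    by apply: functional_extensionality => y; ring.
  by rewrite {1}E dotvB h1 h2 subrr.
move/dotv_self0 => H; apply: functional_extensionality => x.
by have := congr1 (fun f => f x) H => /= /eqP; rewrite subr_eq0 => /eqP.
Qed.

Lemma specproj_spec (th : R) (v : T -> R) : symmetric e -> is_eigproj e th v (specproj e th v).
Proof. by move=> he; apply: epsilon_spec; exact: eigproj_exists. Qed.

Lemma specprojE (th : R) (v w : T -> R) : symmetric e -> is_eigproj e th v w -> specproj e th v = w.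
Proof. by move=> he H; apply: (eigproj_uniq (specproj_spec th v he) H). Qed.

Lemma specprojD (th : R) (v1 v2 : T -> R) : symmetric e ->
  specproj e th (fun x => v1 x + v2 x) = (fun x => specproj e th v1 x + specproj e th v2 x).
Proof.
move=> he; apply: specprojE => //.
have [a1 o1] := specproj_spec th v1 he; have [a2 o2] := specproj_spec th v2 he.
split; first by move=> x; rewrite adjopD a1 a2 mulrDr.
move=> u hu.
have -> : (fun x => v1 x + v2 x - (specproj e th v1 x + specproj e th v2 x)) =
  (fun x => (v1 x - specproj e th v1 x) + (v2 x - specproj e th v2 x)).
  by apply: functional_extensionality => x; ring.
by rewrite dotvD o1 // o2 // addr0.
Qed.

Lemma specprojB (th : R) (v1 v2 : T -> R) : symmetric e ->
  specproj e th (fun x => v1 x - v2 x) = (fun x => specproj e th v1 x - specproj e th v2 x).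
Proof.
move=> he; apply: specprojE => //.
have [a1 o1] := specproj_spec th v1 he; have [a2 o2] := specproj_spec th v2 he.
split; first by move=> x; rewrite adjopB a1 a2 mulrBr.
move=> u hu.
have -> : (fun x => v1 x - v2 x - (specproj e th v1 x - specproj e th v2 x)) =
  (fun x => (v1 x - specproj e th v1 x) - (v2 x - specproj e th v2 x)).
  by apply: functional_extensionality => x; ring.
by rewrite dotvB o1 // o2 // subr0.
Qed.

End Gen.

Section Line.
Variables (R : realType) (T : finType) (e : rel T).
Hypothesis hirr : irreflexive e.

Definition Bop (w : edge_of e -> R) (x : T) : R := \sum_(t : edge_of e | x \in val t) w t.
Definition Cop (r : T -> R) (s : edge_of e) : R := \sum_(x in val s) r x.

Lemma card_edge (s : edge_of e) : #|val s| = 2%N.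
Proof.
case: s => S /= /existsP [x /existsP [y /andP [hxy /eqP ->]]].
rewrite cards2; case: eqP => // exy; by rewrite exy hirr in hxy.
Qed.

Lemma card_cap (s t : edge_of e) : s != t ->
  #|val s :&: val t| = (val s :&: val t != set0) :> nat.
Proof.
move=> nst.
have le2 : (#|val s :&: val t| <= 2)%N.
  by rewrite -(card_edge s) subset_leq_card // subsetIl.
have ne2 : #|val s :&: val t| != 2%N.
  apply/eqP => h2; move: nst; rewrite -(inj_eq val_inj) => /eqP; apply.
  have e1 : val s :&: val t = val s.
    by apply/eqP; rewrite eqEcard subsetIl h2 card_edge.
  have e2 : val s :&: val t = val t.
    by apply/eqP; rewrite eqEcard subsetIr h2 card_edge.
  by rewrite -e1 -{2}e2.
rewrite -card_gt0; move: le2 ne2; case: #|_| => [|[|[|n]]] //.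
Qed.

Lemma line_adj (w : edge_of e -> R) (s : edge_of e) :
  adjop (line_rel e) w s = Cop (Bop w) s - 2 * w s.
Proof.
have -> : Cop (Bop w) s = \sum_t (#|val s :&: val t|)%:R * w t.
  rewrite /Cop /Bop.
  under eq_bigr => x _ do rewrite big_mkcond /=.
  rewrite exchange_big /=; apply: eq_bigr => t _.
  rewrite -big_mkcondr /= (eq_bigl (mem (val s :&: val t))); last by move=> x; rewrite !inE.
  by rewrite sumr_const mulr_natl.
rewrite (bigD1 s) //= setIid card_edge /adjop.
rewrite addrAC subrr add0r big_mkcond [RHS]big_mkcond /=; apply: eq_bigr => t _.
rewrite /line_rel eq_sym; case: eqP => [-> | /eqP ne] //=.
rewrite card_cap 1?eq_sym //; by case: ifP => _; rewrite ?mul1r ?mul0r.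
Qed.

Lemma Cop_Bop_adj (g : edge_of e -> R) (r : T -> R) : dotv g (Cop r) = dotv (Bop g) r.
Proof.
rewrite /dotv /Cop /Bop.
under eq_bigr => s _ do rewrite mulr_sumr big_mkcond /=.
under [RHS]eq_bigr => x _ do rewrite mulr_suml big_mkcond /=.
rewrite exchange_big /=; apply: eq_bigr => x _; apply: eq_bigr => s _.
by case: (x \in val s).
Qed.

End Line.

Section Cart.
Variables (T : finType) (e : rel T).
Hypothesis hirr : irreflexive e.

Local Notation eX := (cartprod e K2).
Local Notation EX := (edge_of eX).
Local Notation E1 := (edge_of e).

Lemma irrX : irreflexive eX.
Proof. by move=> [x i]; rewrite /cartprod /K2 /= !eqxx hirr. Qed.

Lemma lay_edge i (s : E1) : is_edge eX [set p | (p.2 == i) && (p.1 \in val s)].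
Proof.
case: s => S /= /existsP [x /existsP [y /andP [hxy /eqP ->]]].
apply/existsP; exists (x, i); apply/existsP; exists (y, i).
rewrite /cartprod /= hxy eqxx orbT /=; apply/eqP/setP => -[p1 p2].
rewrite !inE /= !xpair_eqE.
by case: (p2 == i); case: (p1 == x); case: (p1 == y).
Qed.

Definition lay i (s : E1) : EX :=
  exist (fun S => is_edge eX S) [set p | (p.2 == i) && (p.1 \in val s)] (lay_edge i s).

Lemma rung_edge v : is_edge eX [set p | p.1 == v].
Proof.
apply/existsP; exists (v, false); apply/existsP; exists (v, true).
rewrite /cartprod /K2 /= eqxx /=; apply/eqP/setP => -[p1 p2].
rewrite !inE /= !xpair_eqE.
by case: p2; case: (p1 == v).
Qed.

Definition rung v : EX := exist (fun S => is_edge eX S) [set p | p.1 == v] (rung_edge v).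

Lemma in_lay p i s : (p \in val (lay i s)) = (p.2 == i) && (p.1 \in val s).
Proof. by rewrite /= inE. Qed.
Lemma in_rung p v : (p \in val (rung v)) = (p.1 == v).
Proof. by rewrite /= inE. Qed.

Lemma edge_ne (s : E1) : exists x, x \in val s.
Proof.
case: s => S /= /existsP [x /existsP [y /andP [hxy /eqP ->]]].
by exists x; rewrite !inE eqxx.
Qed.

Lemma lay_inj i j s s' : (lay i s == lay j s') = (i == j) && (s == s').
Proof.
apply/eqP/andP => [H|[/eqP -> /eqP ->] //].
have [x hx] := edge_ne s.
have h1 : (x, i) \in val (lay j s') by rewrite -H in_lay /= eqxx hx.
rewrite in_lay /= in h1; case/andP: h1 => /eqP ij _; move: H; rewrite -ij => H; split => //.
apply/eqP/val_inj/setP => y.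
have := congr1 (fun t : EX => (y, i) \in val t) H.
by rewrite !in_lay /= eqxx.
Qed.

Lemma lay_rung i s v : (lay i s == rung v) = false.
Proof.
apply/negbTE/eqP => H.
have := congr1 (fun t : EX => (v, ~~ i) \in val t) H.
rewrite in_lay in_rung /= eqxx.
by case: (i) => /=; rewrite ?andbF ?andbT.
Qed.

Lemma rung_inj v v' : (rung v == rung v') = (v == v').
Proof.
apply/eqP/eqP => [H|-> //].
have := congr1 (fun t : EX => (v, true) \in val t) H.
by rewrite !in_rung /= eqxx => /esym/eqP.
Qed.

Lemma classify (t : EX) : (exists i s, t = lay i s) \/ (exists v, t = rung v).
Proof.
case: t => S hS; have := hS; move=> /existsP [[x1 x2] /existsP [[y1 y2] /andP [hxy /eqP hS']]].
move: hxy; rewrite /cartprod /K2 /= => /orP [/andP [/eqP e1 n2]|/andP [/eqP e2 hxy]].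
  right; exists x1; apply: val_inj => /=; rewrite hS'; clear hS'; apply/setP => -[p1 p2].
  rewrite !inE !xpair_eqE /= -e1; move: n2.
  by case: x2; case: y2; case: p2; case: (p1 == x1); rewrite ?orbF.
have hs : is_edge e [set x1; y1].
  by apply/existsP; exists x1; apply/existsP; exists y1; rewrite hxy eqxx.
left; exists x2, (exist (fun S => is_edge e S) _ hs); apply: val_inj => /=; rewrite hS'; clear hS'; apply/setP => -[p1 p2].
rewrite !inE !xpair_eqE /= -e2.
by case: (p2 == x2); case: (p1 == x1); case: (p1 == y1).
Qed.

Variable R : realType.

Lemma sum1 (X : finType) (a : X) (F : X -> R) : \sum_x (a == x)%:R * F x = F a.
Proof.
rewrite (bigD1 a) //= eqxx mul1r big1 ?addr0 // => x /negbTE.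
by rewrite eq_sym => ->; rewrite mul0r.
Qed.

Lemma sum2 (X Y : finType) (a : X) (b : Y) (F : X -> Y -> R) :
  \sum_x \sum_y ((a == x) && (b == y))%:R * F x y = F a b.
Proof.
rewrite (eq_bigr (fun x => (a == x)%:R * \sum_y (b == y)%:R * F x y)); last first.
  move=> x _; rewrite mulr_sumr; apply: eq_bigr => y _.
  by case: (a == x); rewrite /= ?mul1r ?mul0r.
rewrite (eq_bigr (fun x => (a == x)%:R * F x b)); last by move=> x _; rewrite sum1.
exact: (sum1 a (fun x => F x b)).
Qed.

Definition enc (g : bool -> E1 -> R) (r : T -> R) (t : EX) : R :=
  \sum_i \sum_s (t == lay i s)%:R * g i s + \sum_v (t == rung v)%:R * r v.

Lemma enc_lay g r j s : enc g r (lay j s) = g j s.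
Proof.
rewrite /enc.
under eq_bigr => i _ do under eq_bigr => s' _ do rewrite lay_inj.
rewrite sum2 big1 ?addr0 // => v _; by rewrite lay_rung mul0r.
Qed.

Lemma enc_rung g r v : enc g r (rung v) = r v.
Proof.
rewrite /enc.
under eq_bigr => i _ do under eq_bigr => s' _ do rewrite eq_sym lay_rung mul0r.
rewrite big1 ?add0r; last by move=> i _; rewrite big1.
rewrite (eq_bigr (fun w => (v == w)%:R * r w)); first exact: sum1.
move=> w _; by rewrite rung_inj.
Qed.

Lemma decomp (u : EX -> R) : u = enc (fun i s => u (lay i s)) (fun v => u (rung v)).
Proof.
apply: functional_extensionality => t.
by case: (classify t) => [[i [s ->]]|[v ->]]; rewrite ?enc_lay ?enc_rung.
Qed.

Lemma sum_split (F : EX -> R) :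
  \sum_t F t = \sum_i \sum_s F (lay i s) + \sum_v F (rung v).
Proof.
rewrite (eq_bigr (enc (fun i s => F (lay i s)) (fun v => F (rung v)))); last first.
  by move=> t _; rewrite -decomp.
rewrite /enc big_split /=; congr (_ + _).
  rewrite exchange_big /=; apply: eq_bigr => i _.
  rewrite exchange_big /=; apply: eq_bigr => s _.
  rewrite (eq_bigr (fun t => (lay i s == t)%:R * F (lay i s))).
    exact: (sum1 (lay i s) (fun _ => F (lay i s))).
  by move=> t _; rewrite eq_sym.
rewrite exchange_big /=; apply: eq_bigr => v _.
rewrite (eq_bigr (fun t => (rung v == t)%:R * F (rung v))).
  exact: (sum1 (rung v) (fun _ => F (rung v))).
by move=> t _; rewrite eq_sym.
Qed.

End Cart.

Section Ops.
Variables (R : realType) (T : finType) (e : rel T).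
Hypothesis hirr : irreflexive e.
Local Notation eX := (cartprod e K2).
Local Notation EX := (edge_of eX).
Local Notation E1 := (edge_of e).

Lemma sum_pairT (F : T * bool -> R) : \sum_p F p = \sum_x \sum_j F (x, j).
Proof. by rewrite pair_bigA; apply: eq_bigr => -[x j]. Qed.

Lemma BX_enc (g : bool -> E1 -> R) (r : T -> R) x i :
  Bop (enc g r) (x, i) = Bop (g i) x + r x.
Proof.
rewrite /Bop big_mkcond sum_split /=.
under eq_bigr => j _ do under eq_bigr => s _ do rewrite in_lay enc_lay /=.
rewrite [X in _ + X](eq_bigr (fun v => if x == v then r v else 0)); last first.
  by move=> v _; rewrite inE enc_rung.
congr (_ + _).
  rewrite (bigD1 i) //= [X in _ + X]big1 ?addr0; last first.
    move=> j ji; have -> : (i == j) = false by rewrite eq_sym (negbTE ji).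
    by rewrite big1.
  by rewrite [RHS]big_mkcond; apply: eq_bigr => s _; rewrite eqxx.
rewrite (bigD1 x) //= eqxx big1 ?addr0 // => v vx.
by rewrite eq_sym (negbTE vx).
Qed.

Lemma CX_lay (phi : T * bool -> R) (i : bool) (s : E1) :
  Cop phi (lay i s) = Cop (fun x => phi (x, i)) s.
Proof.
rewrite /Cop big_mkcond sum_pairT [RHS]big_mkcond; apply: eq_bigr => x _.
rewrite (bigD1 i) //= [X in _ + X]big1 ?addr0; last first.
  by move=> j /negbTE nj; rewrite inE /= nj.
by rewrite inE /= eqxx.
Qed.

Lemma CX_rung (phi : T * bool -> R) (v : T) :
  Cop phi (rung e v) = phi (v, true) + phi (v, false).
Proof.
rewrite /Cop big_mkcond sum_pairT (bigD1 v) //= [X in _ + X]big1 ?addr0; last first.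
  by move=> x /negbTE nx; rewrite big1 // => j _; rewrite inE /= nx.
by rewrite big_bool !inE /= eqxx.
Qed.

Lemma adj_lay (g : bool -> E1 -> R) (r : T -> R) i s :
  adjop (line_rel eX) (enc g r) (lay i s) = adjop (line_rel e) (g i) s + Cop r s.
Proof.
rewrite (line_adj (irrX hirr)) (line_adj hirr) CX_lay enc_lay.
rewrite /Cop. under eq_bigr => x _ do rewrite BX_enc.
by rewrite big_split /=; ring.
Qed.

Lemma adj_rung (g : bool -> E1 -> R) (r : T -> R) v :
  adjop (line_rel eX) (enc g r) (rung e v) = Bop (g true) v + Bop (g false) v.
Proof.
rewrite (line_adj (irrX hirr)) CX_rung enc_rung !BX_enc; ring.
Qed.

Lemma dot_enc (g g' : bool -> E1 -> R) (r r' : T -> R) :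
  dotv (enc g r) (enc g' r') =
  dotv (g true) (g' true) + dotv (g false) (g' false) + dotv r r'.
Proof.
rewrite /dotv sum_split big_bool /=; congr (_ + _ + _).
- by apply: eq_bigr => s _; rewrite !enc_lay.
- by apply: eq_bigr => s _; rewrite !enc_lay.
- by apply: eq_bigr => s _; rewrite !enc_rung.
Qed.

End Ops.

Section Lin.
Variables (R : realType) (T : finType) (e : rel T).
Lemma adjopN (u : T -> R) x : adjop e (fun y => - u y) x = - adjop e u x.
Proof. by rewrite /adjop sumrN. Qed.
Lemma dotvZ c (u w : T -> R) : dotv (fun y => c * u y) w = c * dotv u w.
Proof. by rewrite /dotv mulr_sumr; apply: eq_bigr => i _; rewrite mulrA. Qed.
Lemma dotvN (u w : T -> R) : dotv (fun y => - u y) w = - dotv u w.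
Proof. by rewrite /dotv -sumrN; apply: eq_bigr => i _; rewrite mulNr. Qed.
Lemma dotv0 (w : T -> R) : dotv (fun _ => 0) w = 0.
Proof. by rewrite /dotv big1 // => i _; rewrite mul0r. Qed.
Lemma BopD (u w : edge_of e -> R) x : Bop (fun y => u y + w y) x = Bop u x + Bop w x.
Proof. by rewrite /Bop big_split. Qed.
Lemma BopZ c (u : edge_of e -> R) x : Bop (fun y => c * u y) x = c * Bop u x.
Proof. by rewrite /Bop mulr_sumr. Qed.
Lemma BopN (u : edge_of e -> R) x : Bop (fun y => - u y) x = - Bop u x.
Proof. by rewrite /Bop sumrN. Qed.
Lemma CopZ c (u : T -> R) (s : edge_of e) : Cop (fun y => c * u y) s = c * Cop u s.
Proof. by rewrite /Cop mulr_sumr. Qed.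
Lemma CopN (u : T -> R) (s : edge_of e) : Cop (fun y => - u y) s = - Cop u s.
Proof. by rewrite /Cop sumrN. Qed.
Lemma CopD (u w : T -> R) (s : edge_of e) : Cop (fun y => u y + w y) s = Cop u s + Cop w s.
Proof. by rewrite /Cop big_split. Qed.
Lemma Cop0 (s : edge_of e) : Cop (fun _ : T => (0 : R)) s = 0.
Proof. by rewrite /Cop big1. Qed.
Lemma line_sym : symmetric (line_rel e).
Proof. by move=> s t; rewrite /line_rel eq_sym setIC. Qed.
End Lin.

Section Alg.
Variable R : realType.
Lemma alg1 (l C B0 B1 u0 u1 : R) : l + 2 != 0 ->
  B0 - 2 * u0 + C = l * u0 -> B1 - 2 * u1 + C = l * u1 -> B0 + B1 = l * C ->
  C = u0 + u1.
Proof.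
move=> l2 H0 H1 HB.
have E : (l + 2) * (C - (u0 + u1)) =
  (B0 - 2 * u0 + C - l * u0) + (B1 - 2 * u1 + C - l * u1) - (B0 + B1 - l * C) by ring.
rewrite H0 H1 HB !subrr addr0 in E.
move: E => /eqP; rewrite subrr. by rewrite mulf_eq0 (negbTE l2) /= subr_eq0 => /eqP.
Qed.
Lemma alg2 (l C A0 A1 u0 u1 : R) :
  A0 + C = l * u0 -> A1 + C = l * u1 -> C = u0 + u1 -> A0 + A1 = (l - 2) * (u0 + u1).
Proof.
move=> H0 H1 HC.
have -> : A0 + A1 = (A0 + C) + (A1 + C) - 2 * C by ring.
by rewrite H0 H1 HC; ring.
Qed.
Lemma alg3 (l B q : R) : B - 2 * q = (l - 2) * q -> B = l * q.
Proof. by move=> H; rewrite -[B](subrK (2 * q)) H; ring. Qed.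
End Alg.

Section Main.
Variables (R : realType) (T : finType) (e : rel T) (fab : edge_of e).
Hypothesis hirr : irreflexive e.
Local Notation eX := (cartprod e K2).
Local Notation EX := (edge_of eX).
Local Notation E1 := (edge_of e).
Local Notation L1 := (line_rel e).
Local Notation LX := (line_rel eX).
Local Notation f := (vstate R fab).
Local Notation Q th := (specproj L1 th f).

Lemma encE (u : EX -> R) (g : bool -> E1 -> R) (r : T -> R) :
  (forall i s, u (lay i s) = g i s) -> (forall v, u (rung e v) = r v) -> u = enc g r.
Proof.
move=> H1 H2; apply: (eq_trans (decomp u)); congr enc.
  by apply: functional_extensionality => i; apply: functional_extensionality => s.
by apply: functional_extensionality => v.
Qed.

Lemma eig_parts (u : EX -> R) (l : R) : (forall t, adjop LX u t = l * u t) ->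
  (forall i s, adjop L1 (fun s => u (lay i s)) s + Cop (fun v => u (rung e v)) s
               = l * u (lay i s)) /\
  (forall v, Bop (fun s => u (lay true s)) v + Bop (fun s => u (lay false s)) v
               = l * u (rung e v)).
Proof.
move=> H; split.
  by move=> i s; have := H (lay i s); rewrite {1}(decomp u) (adj_lay hirr).
by move=> v; have := H (rung e v); rewrite {1}(decomp u) (adj_rung hirr).
Qed.

Lemma enc_eig (g : bool -> E1 -> R) (r : T -> R) (l : R) :
  (forall i s, adjop L1 (g i) s + Cop r s = l * g i s) ->
  (forall v, Bop (g true) v + Bop (g false) v = l * r v) ->
  forall t, adjop LX (enc g r) t = l * enc g r t.
Proof.
move=> H1 H2 t; case: (classify t) => [[i [s ->]]|[v ->]].
  by rewrite (adj_lay hirr) enc_lay.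
by rewrite (adj_rung hirr) enc_rung.
Qed.

Local Notation h1 := (vstate R (lay false fab)).
Local Notation h2 := (vstate R (lay true fab)).

Lemma h_lay j i s : vstate R (lay j fab) (lay i s) = if i == j then f s else 0.
Proof. by rewrite /vstate lay_inj; case: (i == j). Qed.
Lemma h_rung j v : vstate R (lay j fab) (rung e v) = 0.
Proof. by rewrite /vstate eq_sym lay_rung. Qed.

Lemma hdiffE : (fun t => h1 t - h2 t) =
  enc (fun i s => if i then - f s else f s) (fun _ => 0).
Proof.
apply: encE => [i s|v]; last by rewrite !h_rung subrr.
by rewrite !h_lay; case: i => /=; rewrite ?subr0 ?sub0r.
Qed.

Lemma hsumE : (fun t => h1 t + h2 t) = enc (fun _ s => f s) (fun _ => 0).
Proof.
apply: encE => [i s|v]; last by rewrite !h_rung addr0.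
by rewrite !h_lay; case: i => /=; rewrite ?addr0 ?add0r.
Qed.

Definition Dd th := enc (fun i s => if i then - Q th s else Q th s) (fun _ => (0:R)).

Lemma projA th : specproj LX th (fun t => h1 t - h2 t) = Dd th.
Proof.
apply: specprojE; first exact: line_sym.
have [eQ oQ] := specproj_spec th f (@line_sym _ e).
split.
  apply: enc_eig => [i s|v].
    rewrite Cop0 addr0; case: i => /=; last exact: eQ.
    by rewrite adjopN eQ mulrN.
  by rewrite /= BopN addNr mulr0.
move=> u hu.
have -> : (fun x => h1 x - h2 x - Dd th x)
  = enc (fun i s => if i then - (f s - Q th s) else f s - Q th s) (fun _ => 0).
  apply: encE => [i s|v]; last by rewrite /Dd !h_rung !enc_rung !subrr.
  by rewrite /Dd !h_lay !enc_lay; case: i => /=; ring.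
rewrite {1}(decomp u) dot_enc /= dotvN dotv0 addr0.
have [ep _] := eig_parts hu.
have eig01 : forall s, adjop L1 (fun s => u (lay false s) - u (lay true s)) s
    = th * (u (lay false s) - u (lay true s)).
  move=> s; rewrite adjopB; have := ep false s; have := ep true s.
  move=> h1' h0'; rewrite mulrBr -h1' -h0'; ring.
have := oQ _ eig01; rewrite dotvBr => H; lra.
Qed.

Definition Sd (l : R) := enc (fun _ s => l / (l + 2) * Q (l - 2) s)
  (fun v => 2 / (l + 2) * Bop (Q (l - 2)) v).

Lemma projB l : l != -2 -> specproj LX l (fun t => h1 t + h2 t) = Sd l.
Proof.
move=> ln2; have l2 : l + 2 != 0 by rewrite addr_eq0.
apply: specprojE; first exact: line_sym.
have [eQ oQ] := specproj_spec (l - 2) f (@line_sym _ e).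
have CB : forall s, Cop (Bop (Q (l - 2))) s = l * Q (l - 2) s.
  by move=> s; apply: alg3; rewrite -(line_adj hirr); exact: eQ.
split.
  apply: enc_eig => [i s|v] /=.
    rewrite adjopZ eQ CopZ CB; field; exact: l2.
  rewrite !BopZ; field; exact: l2.
move=> u hu.
have -> : (fun x => h1 x + h2 x - Sd l x) =
  enc (fun _ s => f s - l / (l + 2) * Q (l - 2) s)
      (fun v => - (2 / (l + 2) * Bop (Q (l - 2)) v)).
  apply: encE => [i s|v]; last by rewrite /Sd !h_rung enc_rung add0r sub0r.
  by rewrite /Sd !h_lay !enc_lay; case: i => /=; rewrite ?addr0 ?add0r.
rewrite {1}(decomp u) dot_enc /=.
have [ep er] := eig_parts hu.
have Cr : forall s, Cop (fun v => u (rung e v)) s = u (lay false s) + u (lay true s).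
  move=> s; have := ep false s; have := ep true s.
  rewrite !(line_adj hirr) => H1 H0.
  apply: (alg1 l2 H0 H1).
  rewrite -CopD -CopZ; apply: eq_bigr => x _; rewrite -er; ring.
have ss : forall s, adjop L1 (fun s => u (lay false s) + u (lay true s)) s
    = (l - 2) * (u (lay false s) + u (lay true s)).
  by move=> s; rewrite adjopD; apply: alg2 (ep false s) (ep true s) (Cr s).
have O := oQ _ ss; rewrite dotvB !dotvDr in O.
have adj := Cop_Bop_adj (Q (l - 2)) (fun v => u (rung e v)).
have ECr : Cop (fun v => u (rung e v)) = (fun s => u (lay false s) + u (lay true s)).
  by apply: functional_extensionality => s; exact: Cr.
rewrite ECr dotvDr in adj.
rewrite !dotvB dotvN !dotvZ -adj.
rewrite -[RHS]O; field; exact: l2.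
Qed.

Lemma projC : specproj LX (-2) (fun t => h1 t + h2 t) <> (fun _ => 0).
Proof.
move=> H.
have [_ o] := specproj_spec (-2) (fun t => h1 t + h2 t) (@line_sym _ eX).
rewrite H in o.
have eu : forall t, adjop LX (enc (fun _ s => f s) (fun v => - Bop f v)) t
    = -2 * enc (fun _ s => f s) (fun v => - Bop f v) t.
  apply: enc_eig => [i s|v] /=.
    by rewrite (line_adj hirr) CopN; ring.
  ring.
have := o _ eu.
have -> : (fun x => h1 x + h2 x - 0) = enc (fun _ s => f s) (fun _ => 0).
  by rewrite -hsumE; apply: functional_extensionality => x; rewrite subr0.
rewrite dot_enc dotv0 addr0.
have -> : dotv f f = 1.
  rewrite /dotv (bigD1 fab) //= /vstate eqxx mul1r big1 ?addr0 // => s /negbTE ->.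
  by rewrite mul0r.
by move/eqP; rewrite -mulr2n pnatr_eq0.
Qed.

Hypothesis hQ2 : Q (-2) = (fun _ => 0).

Local Notation p1 th := (specproj LX th h1).
Local Notation p2 th := (specproj LX th h2).

Lemma diffE th : (fun x => p1 th x - p2 th x) = Dd th.
Proof. by rewrite -projA specprojB //; exact: line_sym. Qed.
Lemma sumE th : (fun x => p1 th x + p2 th x) = specproj LX th (fun t => h1 t + h2 t).
Proof. by rewrite specprojD //; exact: line_sym. Qed.

Lemma Z_iff th : (fun x => p1 th x - p2 th x) = (fun _ => 0) <-> Q th = (fun _ => 0).
Proof.
rewrite diffE; split => H.
  apply: functional_extensionality => s.
  by have := congr1 (fun g => g (lay false s)) H; rewrite /Dd enc_lay.
rewrite /Dd H; symmetry; apply: encE => [i s|v] //=.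
by case: i; rewrite ?oppr0.
Qed.

Lemma Y_iff l : (fun x => p1 l x + p2 l x) = (fun _ => 0) <->
  (l != -2 /\ Q (l - 2) = (fun _ => 0)).
Proof.
rewrite sumE; have [->|ln2] := eqVneq l (-2).
  by split => [H|[]]; [exfalso; exact: (projC H) | ].
rewrite projB //; split => [H|[_ H]]; first split => //.
  have [->|l0] := eqVneq l 0; first by rewrite sub0r hQ2.
  have l2 : l + 2 != 0 by rewrite addr_eq0.
  apply: functional_extensionality => s.
  have := congr1 (fun g => g (lay false s)) H; rewrite /Sd enc_lay => /eqP.
  by rewrite mulf_eq0 mulf_eq0 invr_eq0 (negbTE l0) (negbTE l2) /= => /eqP.
rewrite /Sd H; symmetry; apply: encE => [i s|v] /=; first by rewrite mulr0.
by rewrite /Bop big1 ?mulr0.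
Qed.


Lemma eqZ (X : Type) (u w : X -> R) : u = w <-> (fun x => u x - w x) = (fun _ => 0).
Proof.
split => [->|H]; apply: functional_extensionality => x; first by rewrite subrr.
by have := congr1 (fun g => g x) H => /= /eqP; rewrite subr_eq0 => /eqP.
Qed.
Lemma eqY (X : Type) (u w : X -> R) :
  u = (fun x => - w x) <-> (fun x => u x + w x) = (fun _ => 0).
Proof.
split => [->|H]; apply: functional_extensionality => x; first by rewrite addNr.
by have := congr1 (fun g => g x) H => /= /eqP; rewrite addr_eq0 => /eqP.
Qed.
Lemma ZY0 (X : Type) (u w : X -> R) : u = w ->
  (u = (fun _ => 0) <-> (fun x => u x + w x) = (fun _ => 0)).
Proof.
move=> <-; split => [->|H]; apply: functional_extensionality => x; first by rewrite addr0.
have := congr1 (fun g => g x) H => /= /eqP.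
by rewrite -mulr2n -mulr_natr mulf_eq0 pnatr_eq0 orbF => /eqP.
Qed.

Lemma norm2 (x y : R) : `|x - y| = 2 -> x - 2 = y \/ y - 2 = x.
Proof.
move/eqP; rewrite eqr_norml => /andP [/orP [/eqP H|/eqP H] _].
  by left; rewrite -H; ring.
by right; rewrite (_ : y = x + 2); [ring | rewrite -(subrK y x) H; ring].
Qed.


Lemma main_sec :
  (strongly_cospectral LX h1 h2 <->
   (forall th th' : R, eig_support L1 f th -> eig_support L1 f th' -> `|th - th'| != 2)) /\
  (strongly_cospectral LX h1 h2 ->
   (forall th : R, Psi_minus LX h1 h2 th <-> eig_support L1 f th) /\
   (forall th : R, Psi_plus LX h1 h2 th <->
      ((exists th0, eig_support L1 f th0 /\ th = th0 + 2) \/ th = -2))).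
Proof.
rewrite /strongly_cospectral /eig_support /Psi_minus /Psi_plus.
have SCiff : forall l, (p1 l = p2 l \/ p1 l = (fun x => - p2 l x)) <->
    (Q l = (fun _ => 0) \/ (l != -2 /\ Q (l - 2) = (fun _ => 0))).
  by move=> l; rewrite eqZ eqY Z_iff Y_iff.
split.
  split.
    move=> SC th th' h h'; apply/negP => /eqP /norm2 [E|E].
      by case: ((SCiff th).1 (SC th)) => [//|[_]]; rewrite E.
    by case: ((SCiff th').1 (SC th')) => [//|[_]]; rewrite E.
  move=> H l; apply/(SCiff l).
  have [hl|hl] := classic (Q l = (fun _ => 0)); first by left.
  right; split.
    by apply/negP => /eqP E; apply: hl; rewrite E.
  apply: NNPP => hl2; have := H l (l - 2) hl hl2.
  by rewrite opprB addrC subrK ger0_norm // ?eqxx.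
move=> SC; split.
  move=> l; split.
    move=> [E N] hl; apply: N.
    have Z : p1 l = p2 l := (eqZ _ _).2 ((Z_iff l).2 hl).
    exact: (ZY0 Z).2 ((eqY _ _).1 E).
  move=> hl.
  have nZ : ~ (p1 l = p2 l) := fun Z => hl ((Z_iff l).1 ((eqZ _ _).1 Z)).
  have Y : p1 l = (fun x => - p2 l x).
    case: (SC l) => [Z|Y]; [exfalso; exact: nZ Z | exact: Y].
  split; first exact: Y.
  move=> N; apply: nZ; rewrite N; rewrite N in Y.
  apply: functional_extensionality => x.
  have := congr1 (fun g => g x) Y => /= /eqP; rewrite eq_sym oppr_eq0 => /eqP ->.
  by [].
move=> l.
have eqR : (exists th0, Q th0 <> (fun _ => 0) /\ l = th0 + 2) \/ l = -2 <->
    ~ ((fun x => p1 l x + p2 l x) = (fun _ => 0)).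
  split.
    move=> [[t0 [h ->]]|->] /(Y_iff _) [].
      by move=> _; rewrite addrK.
    by rewrite eqxx.
  move=> H; have [->|ln2] := eqVneq l (-2); first by right.
  left; exists (l - 2); split; last by rewrite subrK.
  by move=> E; apply: H; apply/(Y_iff l).
split.
  move=> [E N]; apply/eqR => Y; apply: N; exact: (ZY0 E).2 Y.
move=> /eqR NY.
have Z : p1 l = p2 l.
  case: (SC l) => [Z|Y]; first exact: Z.
  exfalso; apply: NY; exact: (eqY _ _).1 Y.
split; first exact: Z.
move=> N; apply: NY; exact: (ZY0 Z).1 N.
Qed.
End Main.

Theorem mainTheorem18 (R : realType) (T : finType) (e : rel T)
  (a b : T) (fab : edge_of e)
  (eps1 eps2 : edge_of (cartprod e K2)) :
  simple_graph e -> connected_graph e -> (1 < #|T|)%N ->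
  e a b -> val fab = [set a; b] ->
  val eps1 = [set (a, false); (b, false)] ->
  val eps2 = [set (a, true); (b, true)] ->
  ~ eig_support (line_rel e) (vstate R fab) (-2) ->
  (strongly_cospectral (line_rel (cartprod e K2)) (vstate R eps1) (vstate R eps2) <->
   (forall th th' : R, eig_support (line_rel e) (vstate R fab) th ->
      eig_support (line_rel e) (vstate R fab) th' -> `|th - th'| != 2)) /\
  (strongly_cospectral (line_rel (cartprod e K2)) (vstate R eps1) (vstate R eps2) ->
   (forall th : R,
      Psi_minus (line_rel (cartprod e K2)) (vstate R eps1) (vstate R eps2) th <->
      eig_support (line_rel e) (vstate R fab) th) /\
   (forall th : R,
      Psi_plus (line_rel (cartprod e K2)) (vstate R eps1) (vstate R eps2) th <->
      ((exists th0, eig_support (line_rel e) (vstate R fab) th0 /\ th = th0 + 2)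
       \/ th = -2))).
Proof.
move=> [_ irr] _ _ _ hfab he1 he2 nsupp.
have E1 : eps1 = lay false fab.
  apply: val_inj; rewrite he1 /= hfab; apply/setP => -[p1 p2].
  rewrite !inE !xpair_eqE /=.
  by case: p2; case: (p1 == a); case: (p1 == b).
have E2 : eps2 = lay true fab.
  apply: val_inj; rewrite he2 /= hfab; apply/setP => -[p1 p2].
  rewrite !inE !xpair_eqE /=.
  by case: p2; case: (p1 == a); case: (p1 == b).
have hQ2 : specproj (line_rel e) (-2) (vstate R fab) = (fun _ => 0).
  exact: NNPP nsupp.
rewrite E1 E2; exact: (main_sec irr hQ2).
Qed.
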